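(* Let $\varphi$ be a Boolean formula in 3-CNF and let $G$ be the graph constructed from $\varphi$ as described in the context. Let $X\subseteq V(G)$ be a minimum cluster deletion set of $G$. Then, for every clause gadget of $G$ (i.e., every $i\in\{1,\dots,m\}$), $X$ contains all vertices of two of the three sides $S_{1,i},S_{2,i},S_{3,i}$ and none of the vertices of the third side.
   Context: Let $\varphi$ consist of clauses $C_1,\dots,C_m$ over variables $x_1,\dots,x_n$, each clause containing exactly three literals, $C_i=(L_i^1\vee L_i^2\vee L_i^3)$. The graph $G$ has vertex set $\{u_{r,s,i}: r\in\{1,2,3\}, s\in\{1,\dots,7\}, i\in\{1,\dots,m\}\}\cup\{v_{r,s,j}: r\in\{1,2\}, s\in\{1,2,3\}, j\in\{1,\dots,n\}\}$ and edge set consisting of: $\{u_{r,s,i},u_{r',s',i}\}$ for all $r\ne r'$ in $\{1,2,3\}$, all $s,s'\in\{1,\dots,7\}$, all $i$; $\{v_{1,s,j},v_{2,s',j}\}$ for all $s,s'\in\{1,2,3\}$, all $j$; $\{u_{r,s,i},v_{1,s',j}\}$ for all $s\in\{1,\dots,7\}$, $s'\in\{1,2,3\}$ whenever $L_i^r = x_j$; and $\{u_{r,s,i},v_{2,s',j}\}$ for all $s\in\{1,\dots,7\}$, $s'\in\{1,2,3\}$ whenever $L_i^r=\neg x_j$. The clause gadget of $C_i$ is the complete tripartite graph on $\{u_{r,s,i}\}$ with sides $S_{r,i}=\{u_{r,s,i}: s\in\{1,\dots,7\}\}$, $r=1,2,3$; the variable gadget of $x_j$ is the complete bipartite graph on $\{v_{r,s,j}\}$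 with sides $T_{r,j}=\{v_{r,s,j}: s\in\{1,2,3\}\}$, $r=1,2$. A cluster deletion set of $G$ is a set $X\subseteq V(G)$ such that $G-X$ contains no induced path on three vertices; it is minimum if it has the smallest possible size. *)

(* Defs.v *)
From mathcomp Require Import all_boot.
Set Implicit Arguments. Unset Strict Implicit. Unset Printing Implicit Defensive.

(* A 3-CNF formula with m clauses over n variables: [phi i r] is the literal
   L_i^{r+1} of clause C_{i+1}, encoded as (variable index j, polarity b),
   with b = true meaning the literal x_j and b = false meaning ~ x_j. *)
Definition cnf3 (m n : nat) := 'I_m -> 'I_3 -> 'I_n * bool.

(* Vertices: inl (r, s, i) is u_{r+1,s+1,i+1};
             inr (r, s, j) is v_{r+1,s+1,j+1}. *)
Definition vtx (m n : nat) : finType :=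
  (('I_3 * 'I_7 * 'I_m) + ('I_2 * 'I_3 * 'I_n))%type.

(* the variable side attached to a literal: v_1 (r = 0) for x_j, v_2 (r = 1) for ~x_j *)
Definition lit_side (b : bool) : nat := if b then 0 else 1.

Definition uv_adj m n (phi : cnf3 m n) (a : 'I_3 * 'I_7 * 'I_m) (b : 'I_2 * 'I_3 * 'I_n) : bool :=
  ((phi a.2 a.1.1).1 == b.2) && (nat_of_ord b.1.1 == lit_side (phi a.2 a.1.1).2).

Definition adj m n (phi : cnf3 m n) : rel (vtx m n) := fun x y =>
  match x, y with
  | inl a, inl a' => (a.2 == a'.2) && (a.1.1 != a'.1.1)
  | inr b, inr b' => (b.2 == b'.2) && (b.1.1 != b'.1.1)
  | inl a, inr b => uv_adj phi a b
  | inr b, inl a => uv_adj phi a b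
  end.

Definition cluster_deletion_set m n (phi : cnf3 m n) (X : {set vtx m n}) : Prop :=
  forall x y z : vtx m n, x \notin X -> y \notin X -> z \notin X ->
    x != z -> adj phi x y -> adj phi y z -> adj phi x z.

Definition min_cluster_deletion_set m n (phi : cnf3 m n) (X : {set vtx m n}) : Prop :=
  cluster_deletion_set phi X /\
  forall Y : {set vtx m n}, cluster_deletion_set phi Y -> #|X| <= #|Y|.

Definition side m n (r : 'I_3) (i : 'I_m) : {set vtx m n} :=
  [set inl (r, s, i) | s : 'I_7].

(* Main.v *)
Require Import Defs.
From mathcomp Require Import all_boot.
From mathcomp Require Import zify.
Set Implicit Arguments. Unset Strict Implicit. Unset Printing Implicit Defensive.

Lemma card_bigcup_le (T I : finType) (F : I -> {set T}) :
  #|\bigcup_i F i| <= \sum_i #|F i|.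
Proof.
apply: (big_ind2 (fun (A : {set T}) k => #|A| <= k)).
- by rewrite cards0.
- move=> A a B b hA hB; apply: leq_trans (leq_card_setU A B) _.
  exact: leq_add.
- by [].
Qed.

Section L.
Variables (m n : nat) (phi : cnf3 m n).

Lemma adj_sym : symmetric (adj phi).
Proof.
case=> [a|b] [a'|b'] //=; by rewrite eq_sym [X in _ && ~~ X]eq_sym.
Qed.

Variable i : 'I_m.

Definition g : {set vtx m n} := \bigcup_(r < 3) side n r i.
Definition T (r : 'I_3) : {set vtx m n} :=
  [set inr ((inord (lit_side (phi i r).2) : 'I_2), s, (phi i r).1) | s : 'I_3].
Definition Y X r := (X :\: g) :|: (g :\: side n r i) :|: T r.

Lemma side_mem r s : inl (r, s, i) \in side n r i.
Proof. by apply/imsetP; exists s. Qed.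

Lemma sideP r x : reflect (exists s, x = inl (r, s, i)) (x \in side n r i).
Proof.
apply: (iffP imsetP) => [[s _ ->]|[s ->]]; by exists s.
Qed.

Lemma side_card r : #|side n r i| = 7.
Proof.
rewrite card_imset ?card_ord //.
by move=> s s' [].
Qed.

Lemma T_card r : #|T r| <= 3.
Proof. by apply: leq_trans (leq_imset_card _ _) _; rewrite card_ord. Qed.

Lemma adj_side_T r s t : t \in T r -> adj phi (inl (r, s, i)) t.
Proof.
case/imsetP=> s' _ ->; rewrite /= /uv_adj /= eqxx /= inordK //.
by case: (phi i r).2.
Qed.

Lemma T_notg r t : t \in T r -> t \notin g.
Proof.
case/imsetP=> s' _ ->; apply/bigcupP=> [[r' _ /sideP [s'' E]]] //.
Qed.

Lemma nbr_side r s w : adj phi (inl (r, s, i)) w -> w \in (g :\: side n r i) :|: T r.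
Proof.
case: w => [[[r' s'] i']|[[l s'] j]] /=.
- case/andP => /eqP <- hr; rewrite in_setU in_setD; apply/orP; left; apply/andP; split.
  + apply/negP => /sideP [s'' [E _]]; by rewrite E eqxx in hr.
  + apply/bigcupP; exists r' => //; exact: side_mem.
- rewrite /uv_adj /=; case/andP => /eqP hj /eqP hl.
  rewrite in_setU; apply/orP; right; apply/imsetP; exists s' => //.
  by rewrite -hl inord_val hj.
Qed.

Lemma cds_Y X r : cluster_deletion_set phi X -> cluster_deletion_set phi (Y X r).
Proof.
move=> cX.
have key : forall v w, v \notin Y X r -> w \notin Y X r -> adj phi v w -> v \notin X.
  move=> v w vY wY vw.
  case: (boolP (v \in g)) => vg.
  - case: (boolP (v \in side n r i)) => vS.
    + case/sideP: vS => s E; subst v.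
      move: (nbr_side vw) => H; move: wY; rewrite /Y -setUA in_setU.
      by rewrite H orbT.
    + move: vY; rewrite /Y !in_setU !in_setD vg vS /=. by case: (v \in X); rewrite ?orbT.
  - apply/negP => vX; move: vY; by rewrite /Y !in_setU !in_setD vg vX.
move=> x y z xY yY zY xz xy yz.
apply: cX => //.
- exact: key xY yY xy.
- by apply: key yY xY _; rewrite adj_sym.
- by apply: key zY yY _; rewrite adj_sym.
- exact: xy.
- exact: yz.
Qed.

Lemma base (X : {set vtx m n}) r : #|X| <= #|Y X r| ->
  #|side n r i| + #|X :\: g| <= #|g :\: X| + #|(X :\: g) :|: T r|.
Proof.
move=> h.
have h1 : #|Y X r| <= #|(X :\: g) :|: T r| + #|g :\: side n r i|.
  rewrite /Y setUAC; exact: leq_card_setU.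
have h2 := cardsID g X.
have h3 := cardsID X g.
have h4 := cardsID (side n r i) g.
have e : g :&: side n r i = side n r i.
  apply/setIidPr/subsetP => x xS; apply/bigcupP; by exists r.
rewrite e in h4.
rewrite setIC in h2.
lia.
Qed.

End L.

Theorem lemma10 (m n : nat) (phi : cnf3 m n) (X : {set vtx m n}) :
  min_cluster_deletion_set phi X ->
  forall i : 'I_m, exists r : 'I_3,
    [disjoint side n r i & X] /\
    (forall r' : 'I_3, r' != r -> side n r' i \subset X).
Proof.
case=> cX minX i.
have ineq r : #|X| <= #|Y phi i X r| by apply: minX; exact: cds_Y.
set K := fun r => side n r i :\: X.
have gK : #|g n i :\: X| <= \sum_(r < 3) #|K r|.
  apply: leq_trans (card_bigcup_le K); apply: subset_leq_card; apply/subsetP => x.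
  rewrite in_setD => /andP [xX /bigcupP [r _ xS]].
  apply/bigcupP; exists r => //; by rewrite in_setD xX.
case: (boolP [exists r, 1 < #|K r|]); last first.
  rewrite negb_exists => /forallP H.
  have : \sum_(r < 3) #|K r| <= \sum_(r < 3) 1 by apply: leq_sum => r _; rewrite leqNgt H.
  rewrite sum_nat_const card_ord muln1 => hs.
  have := base (ineq ord0).
  rewrite side_card.
  have [hU _] := leq_card_setU (X :\: g n i) (T phi i ord0).
  have := T_card phi i ord0.
  move: hU gK hs; clear; lia.
case/existsP => r /card_gt1P [u1 [u2 [u1K u2K u12]]].
move: u1K u2K; rewrite !in_setD => /andP [u1X /sideP [s1 E1]] /andP [u2X /sideP [s2 E2]].
subst u1 u2.
have KA : forall r', r' != r -> K r' = set0.
  move=> r' hr; apply/eqP; apply/negPn/negP => /set0Pn [w].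
  rewrite in_setD => /andP [wX /sideP [s' E]]; subst w.
  have := cX _ _ _ u1X wX u2X u12.
  have hr' : r != r' by rewrite eq_sym.
  by rewrite /= !eqxx /= => /(_ hr' hr).
have TX : T phi i r \subset X.
  apply/subsetP => t tT; apply/negPn/negP => tX.
  have := cX _ _ _ u1X tX u2X u12 (adj_side_T s1 tT).
  by rewrite adj_sym (adj_side_T s2 tT) /= eqxx /= eqxx => /(_ isT).
have hb := base (ineq r).
have eU : (X :\: g n i) :|: T phi i r = X :\: g n i.
  apply/setUidPl/subsetP => t tT; rewrite in_setD (subsetP TX _ tT) andbT.
  exact: T_notg tT.
rewrite eU in hb.
have gKr : #|g n i :\: X| <= #|K r|.
  apply: subset_leq_card; apply/subsetP => x.
  rewrite in_setD => /andP [xX /bigcupP [r' _ xS]].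
  case: (eqVneq r' r) => [<-|hr]; first by rewrite in_setD xX.
  by move: (KA r' hr); move/setP/(_ x); rewrite in_setD xX xS in_set0.
have KS : K r = side n r i.
  apply/eqP; rewrite eqEcard subsetDl; rewrite side_card in hb *; lia.
exists r; split.
- by apply/setDidPl.
- move=> r' hr; rewrite -setD_eq0; apply/eqP; exact: KA.
Qed.
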